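(* Let $(X,\tau_1,\tau_2)$ be a bitopological space, $i,j\in\{1,2\}$, $i\neq j$, which is $(i,j)$-almost regular, $(i,j)_1$-nearly paralindelöf, an $(i,j)$-$P_r$-space, a $(j,i)$-$P$-space and a $j$-$P$-space. Then for every cover $\mathcal U$ of $X$ by $(i,j)$-regular open sets there is a cover $\mathcal M$ of $X$ by $i$-open sets such that for every $p\in X$ the star $\mathrm{St}(p,\mathcal M)=\bigcup\{M\in\mathcal M:p\in M\}$ is contained in some member of $\mathcal U$.
   Context: $(X,\tau_1,\tau_2)$ is a bitopological space and $i,j\in\{1,2\}$, $i\neq j$. For $k\in\{1,2\}$ and $A\subseteq X$, $k\text{-}\mathrm{int}(A)$ and $k\text{-}\mathrm{cl}(A)$ denote interior and closure with respect to $\tau_k$; ''$k$-open''/''$k$-closed'' mean $\tau_k$-open/$\tau_k$-closed. A set $A$ is $(i,j)$-regular open if $A=i\text{-}\mathrm{int}(j\text{-}\mathrm{cl}(A))$. A family $\mathcal V$ refines a family $\mathcal U$ if every member of $\mathcal V$ is contained in some member of $\mathcal U$; a family is a cover of $X$ if its union is $X$. A family $\mathcal V$ is $k$-locally countable if every $x\in X$ has a $k$-open neighbourhood meeting at most countably many members of $\mathcal V$. $X$ is a $k$-$P$-space if every intersection of countably many $k$-open sets is $k$-open. $X$ is a $(j,i)$-$P$-space if every intersection of countably many (possibly just one) $j$-open sets is $i$-open. $X$ is an $(i,j)$-$P_r$-space if every intersection of countably many $(i,j)$-regular open sets is $(i,j)$-regular open. $X$ is $(i,j)$-almost regular if for each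 $x\in X$ and each $(i,j)$-regular open set $U$ containing $x$ there is an $(i,j)$-regular open set $V$ with $x\in V\subseteq j\text{-}\mathrm{cl}(V)\subseteq U$. $X$ is $(i,j)_1$-nearly paralindelöf if every cover of $X$ by $(i,j)$-regular open sets has a refinement which is a cover of $X$ by $i$-open sets and which is $j$-locally countable. *)

(* Defs.v *)
From Stdlib Require Import Classical.

Section Bitop.
Variable X : Type.

Definition set := X -> Prop.
Definition family := set -> Prop.

Definition subset (A B : set) : Prop := forall x, A x -> B x.
Definition set_eq (A B : set) : Prop := forall x, A x <-> B x.

Record is_topology (T : family) : Prop := {
  top_empty : T (fun _ => False);
  top_full : T (fun _ => True);
  top_union : forall F : family, (forall U, F U -> T U) ->
      T (fun x => exists U, F U /\ U x);
  top_inter : forall U V, T U -> T V -> T (fun x => U x /\ V x)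
}.

Definition interior (T : family) (A : set) : set :=
  fun x => exists U, T U /\ U x /\ subset U A.

Definition closure (T : family) (A : set) : set :=
  fun x => forall U, T U -> U x -> exists y, U y /\ A y.

Definition tau (t1 t2 : family) (k : nat) : family :=
  if Nat.eqb k 1 then t1 else t2.

Definition regular_open (Ti Tj : family) (A : set) : Prop :=
  set_eq A (interior Ti (closure Tj A)).

Definition covers (F : family) : Prop := forall x, exists U, F U /\ U x.

Definition refines (V U : family) : Prop :=
  forall A, V A -> exists B, U B /\ subset A B.

Definition meets (A B : set) : Prop := exists x, A x /\ B x.

Definition countably_many_meet (F : family) (N : set) : Prop :=
  exists f : nat -> set, forall V, F V -> meets V N -> exists n, f n = V.

Definition locally_countable (T : family) (F : family) : Prop :=
  forall x, exists N, T N /\ N x /\ countably_many_meet F N.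

(* countable (nonempty) intersections are indexed by sequences *)
Definition P_space (T : family) : Prop :=
  forall f : nat -> set, (forall n, T (f n)) -> T (fun x => forall n, f n x).

(* (j,i)-P-space: countable intersections of j-open sets are i-open *)
Definition P_space2 (Tj Ti : family) : Prop :=
  forall f : nat -> set, (forall n, Tj (f n)) -> Ti (fun x => forall n, f n x).

Definition Pr_space (Ti Tj : family) : Prop :=
  forall f : nat -> set, (forall n, regular_open Ti Tj (f n)) ->
    regular_open Ti Tj (fun x => forall n, f n x).

Definition almost_regular (Ti Tj : family) : Prop :=
  forall x U, regular_open Ti Tj U -> U x ->
    exists V, regular_open Ti Tj V /\ V x /\
      subset V (closure Tj V) /\ subset (closure Tj V) U.

Definition nearly_paralindelof1 (Ti Tj : family) : Prop :=
  forall U : family, (forall A, U A -> regular_open Ti Tj A) -> covers U ->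
    exists V : family, refines V U /\ covers V /\ (forall A, V A -> Ti A) /\
      locally_countable Tj V.

Definition star (M : family) (p : X) : set :=
  fun x => exists A, M A /\ A p /\ A x.

End Bitop.

(* Main.v *)
Require Import Defs.
From Stdlib Require Import Classical ClassicalEpsilon FunctionalExtensionality PropExtensionality.

Lemma set_ext (X : Type) (A B : set X) : (forall x, A x <-> B x) -> A = B.
Proof.
  intro H; apply functional_extensionality; intro x; apply propositional_extensionality; auto.
Qed.

Lemma tau_top (X : Type) (t1 t2 : family X) k :
  is_topology X t1 -> is_topology X t2 -> is_topology X (tau X t1 t2 k).
Proof. intros; unfold tau; destruct (Nat.eqb k 1); auto. Qed.

Lemma cl_mono (X : Type) (T : family X) (A B : set X) :
  subset X A B -> subset X (closure X T A) (closure X T B).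
Proof.
  intros H x Hx V HV Vx. destruct (Hx V HV Vx) as [y [Vy Ay]]. exists y; auto.
Qed.

Lemma cl_ext (X : Type) (T : family X) (A : set X) : subset X A (closure X T A).
Proof. intros x Ax V HV Vx; exists x; auto. Qed.

Lemma full_reg (X : Type) (Ti Tj : family X) : is_topology X Ti ->
  regular_open X Ti Tj (fun _ => True).
Proof.
  intros HT x; split; auto. intros _.
  exists (fun _ => True); split; [apply (top_full _ _ HT)|split; auto].
  intros y _ V HV Vy; exists y; auto.
Qed.

Lemma int_open (X : Type) (T : family X) (S : set X) : is_topology X T ->
  T (interior X T S).
Proof.
  intro HT.
  assert (E : interior X T S = fun x => exists U, (fun U => T U /\ subset X U S) U /\ U x).
  { apply set_ext; intro x; unfold interior; split.
    - intros [U [HU [Ux HUS]]]; exists U; auto.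
    - intros [U [[HU HUS] Ux]]; exists U; auto. }
  rewrite E; apply (top_union _ _ HT); intros U [HU _]; auto.
Qed.

Lemma reg_open (X : Type) (Ti Tj : family X) (A : set X) : is_topology X Ti ->
  regular_open X Ti Tj A -> Ti A.
Proof.
  intros HT HA. assert (E : A = interior X Ti (closure X Tj A)) by (apply set_ext; exact HA).
  rewrite E; apply int_open; auto.
Qed.

Lemma compl_cl_open (X : Type) (T : family X) (V : set X) : is_topology X T ->
  T (fun y => ~ closure X T V y).
Proof.
  intro HT.
  assert (E : (fun y => ~ closure X T V y) =
     fun y => exists U, (fun U => T U /\ forall z, U z -> ~ V z) U /\ U y).
  { apply set_ext; intro y; split.
    - intro Hn. apply not_all_ex_not in Hn. destruct Hn as [U HU].
      apply imply_to_and in HU; destruct HU as [TU HU].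
      apply imply_to_and in HU; destruct HU as [Uy HU].
      exists U; split; auto. split; auto. intros z Uz Vz; apply HU; exists z; auto.
    - intros [U [[TU HU] Uy]] Hc. destruct (Hc U TU Uy) as [z [Uz Vz]]. exact (HU z Uz Vz). }
  rewrite E; apply (top_union _ _ HT); intros U [HU _]; auto.
Qed.

Lemma main_gen (X : Type) (Ti Tj : family X) (HTi : is_topology X Ti) (HTj : is_topology X Tj)
  (Har : almost_regular X Ti Tj) (Hnp : nearly_paralindelof1 X Ti Tj)
  (HPr : Pr_space X Ti Tj) (HPji : P_space2 X Tj Ti) :
  forall U : family X,
    (forall A, U A -> regular_open X Ti Tj A) ->
    covers X U ->
    exists M : family X,
      (forall A, M A -> Ti A) /\ covers X M /\
      (forall p, exists B, U B /\ subset X (star X M p) B).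
Proof.
  intros U HU Hcov.
  pose (W := fun V => regular_open X Ti Tj V /\
                      exists B, U B /\ subset X (closure X Tj V) B).
  assert (HWcov : covers X W).
  { intro x. destruct (Hcov x) as [B [HB Bx]].
    destruct (Har x B (HU B HB) Bx) as [V [HV [Vx [_ HVB]]]].
    exists V; split; [split; auto; exists B; auto | auto]. }
  destruct (Hnp W (fun A HA => proj1 HA) HWcov) as [V' [Href [HV'cov [HV'open HV'lc]]]].
  assert (Hh : forall V, exists B, V' V -> U B /\ subset X (closure X Tj V) B).
  { intro V. destruct (classic (V' V)) as [HV|HV].
    - destruct (Href V HV) as [W0 [[_ [B [HB HWB]]] HVW]].
      exists B; intros _; split; auto. intros y Hy; apply HWB; exact (cl_mono _ _ _ _ HVW y Hy).
    - exists (fun _ => True); intro; contradiction. }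
  pose (h := fun V => proj1_sig (constructive_indefinite_description _ (Hh V))).
  assert (Hhs : forall V, V' V -> U (h V) /\ subset X (closure X Tj V) (h V)).
  { intro V; exact (proj2_sig (constructive_indefinite_description _ (Hh V))). }
  clearbody h.
  pose (G := fun (x : X) (N : set X) (f : nat -> set X) => fun y =>
     N y /\ (forall n, V' (f n) -> closure X Tj (f n) x -> h (f n) y) /\
     (forall n, V' (f n) -> ~ closure X Tj (f n) x -> ~ closure X Tj (f n) y)).
  exists (fun A => exists x N f, Tj N /\ N x /\
            (forall V, V' V -> meets X V N -> exists n, f n = V) /\ A = G x N f).
  split; [|split].
  - intros A [x [N [f [HN [Nx [Hf EA]]]]]]. subst A.
    pose (a := fun n => fun y => V' (f n) -> closure X Tj (f n) x -> h (f n) y).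
    pose (b := fun n => fun y => V' (f n) -> ~ closure X Tj (f n) x -> ~ closure X Tj (f n) y).
    pose (c := fun n => match n with 0 => N | S m => b m end).
    assert (Ha : forall n, regular_open X Ti Tj (a n)).
    { intro n. destruct (classic (V' (f n) /\ closure X Tj (f n) x)) as [[H1 H2]|H].
      - assert (E : a n = h (f n)).
        { apply set_ext; intro y; unfold a; split; auto. }
        rewrite E; apply HU; apply Hhs; auto.
      - assert (E : a n = fun _ => True).
        { apply set_ext; intro y; unfold a; split; auto; intros _ H1 H2; exfalso; auto. }
        rewrite E; apply full_reg; auto. }
    assert (Hc : forall n, Tj (c n)).
    { intros [|n]; simpl; auto.
      destruct (classic (V' (f n) /\ ~ closure X Tj (f n) x)) as [[H1 H2]|H].
      - assert (E : b n = fun y => ~ closure X Tj (f n) y).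
        { apply set_ext; intro y; unfold b; split; auto. }
        rewrite E; apply compl_cl_open; auto.
      - assert (E : b n = fun _ => True).
        { apply set_ext; intro y; unfold b; split; auto; intros _ H1 H2; exfalso; auto. }
        rewrite E; apply (top_full _ _ HTj). }
    assert (E : G x N f = fun y => (fun y => forall n, c n y) y /\ (fun y => forall n, a n y) y).
    { apply set_ext; intro y; unfold G; split.
      - intros [Ny [H1 H2]]; split.
        * intros [|n]; simpl; [exact Ny| exact (H2 n)].
        * exact H1.
      - intros [H1 H2]; split; [exact (H1 0)|split; [exact H2|]].
        intro n; exact (H1 (S n)). }
    rewrite E; apply (top_inter _ _ HTi).
    + apply HPji; auto.
    + apply (reg_open X Ti Tj); auto.
  - intro x. destruct (HV'lc x) as [N [HN [Nx [f Hf]]]].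
    exists (G x N f); split.
    + exists x, N, f; auto.
    + unfold G; split; auto; split; auto.
      intros n Hn Hcl; apply (proj2 (Hhs _ Hn)); auto.
  - intro p. destruct (HV'cov p) as [V0 [HV0 V0p]].
    exists (h V0); split; [apply Hhs; auto|].
    intros y [A [[x [N [f [HN [Nx [Hf EA]]]]]] [Ap Ay]]]. subst A.
    destruct Ap as [Np [_ Hbp]]. destruct Ay as [_ [Hay _]].
    destruct (Hf V0 HV0) as [n En]; [exists p; auto|].
    subst V0.
    destruct (classic (closure X Tj (f n) x)) as [Hcl|Hcl].
    + apply Hay; auto.
    + exfalso; apply (Hbp n HV0 Hcl); apply cl_ext; auto.
Qed.

Theorem mainTheorem5 (X : Type) (t1 t2 : family X) (i j : nat)
  (Ht1 : is_topology X t1) (Ht2 : is_topology X t2)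
  (Hi : i = 1 \/ i = 2) (Hj : j = 1 \/ j = 2) (Hij : i <> j)
  (Har : almost_regular X (tau X t1 t2 i) (tau X t1 t2 j))
  (Hnp : nearly_paralindelof1 X (tau X t1 t2 i) (tau X t1 t2 j))
  (HPr : Pr_space X (tau X t1 t2 i) (tau X t1 t2 j))
  (HPji : P_space2 X (tau X t1 t2 j) (tau X t1 t2 i))
  (HPj : P_space X (tau X t1 t2 j)) :
  forall U : family X,
    (forall A, U A -> regular_open X (tau X t1 t2 i) (tau X t1 t2 j) A) ->
    covers X U ->
    exists M : family X,
      (forall A, M A -> tau X t1 t2 i A) /\ covers X M /\
      (forall p, exists B, U B /\ subset X (star X M p) B).
Proof.
  apply main_gen; auto; apply tau_top; auto.
Qed.
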